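(* Let $n\geq 2$. Let $M$ be the $0/1$ matrix whose rows are indexed by the derangements $\pi$ of $\{1,\dots,n\}$, whose columns are indexed by the ordered pairs $(i,j)$ with $i,j\in\{1,\dots,n-1\}$ and $i\neq j$, and whose $(\pi,(i,j))$-entry is $1$ iff $\pi(i)=j$. Then $M$ has rank $(n-1)(n-2)$.
   Context: A derangement of $\{1,\dots,n\}$ is a permutation with no fixed points. *)

(* Defs.v *)
From HB Require Import structures.
From mathcomp Require Import all_boot all_order all_algebra all_fingroup.
Set Implicit Arguments. Unset Strict Implicit. Unset Printing Implicit Defensive.
Import GRing.Theory.
Local Open Scope ring_scope.

(* {1,...,n} is modelled by 'I_n = {0,...,n-1} (shift by one). *)

Definition derangements (n : nat) : {set {perm 'I_n}} :=
  [set s : {perm 'I_n} | [forall i : 'I_n, s i != i]].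

Definition offdiag_pairs (n : nat) : {set 'I_n * 'I_n} :=
  [set p : 'I_n * 'I_n | [&& (val p.1 < n.-1)%N, (val p.2 < n.-1)%N & p.1 != p.2]].

Definition derange_mx (n : nat) : 'M[rat]_(#|derangements n|, #|offdiag_pairs n|) :=
  \matrix_(r < #|derangements n|, c < #|offdiag_pairs n|)
    (if (enum_val r : {perm 'I_n}) (enum_val c).1 == (enum_val c).2 then 1 else 0).

(* Main.v *)
Require Import Defs.
From HB Require Import structures.
From mathcomp Require Import all_boot all_order all_algebra all_fingroup.
From Stdlib Require Import Lia.
Set Implicit Arguments. Unset Strict Implicit. Unset Printing Implicit Defensive.
Import GRing.Theory Num.Theory.
Local Open Scope ring_scope.

Lemma sum_swap n (f g : 'I_n -> rat) a c : a != c ->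
  (forall i, i != a -> i != c -> f i = g i) ->
  \sum_i f i = \sum_i g i -> f a + f c = g a + g c.
Proof.
move=> ac Hfg.
have D : forall h : 'I_n -> rat, \sum_i h i = h a + (h c + \sum_(i | (i != a) && (i != c)) h i).
  by move=> h; rewrite (bigD1 a) //= (bigD1 c) //= eq_sym.
rewrite !D.
rewrite (eq_bigr g); last by move=> i /andP[]; apply: Hfg.
by rewrite !addrA => /addIr.
Qed.
Lemma next_neq (T : eqType) (s : seq T) x :
  uniq s -> (1 < size s)%N -> x \in s -> next s x != x.
Proof.
move=> Us Hs xs; rewrite next_nth xs.
case: s Us Hs xs => [|y p] // Us Hs xs.
have Hi : (index x (y :: p) < (size p).+1)%N by rewrite -index_mem in xs.
rewrite -{2}(nth_index y xs).
have [lt|ge] := ltnP (index x (y :: p)) (size p).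
  have -> : nth y p (index x (y :: p)) = nth y (y :: p) (index x (y :: p)).+1 by [].
  by rewrite nth_uniq //= ?ltnS // eqn_leq ltnn.
have E : index x (y :: p) = size p by apply/eqP; rewrite eqn_leq ge -ltnS Hi.
rewrite E nth_default //.
have -> : y = nth y (y :: p) 0 by [].
rewrite nth_uniq //=.
by move: Hs; rewrite eq_sym /=; case: (size p).
Qed.

Lemma next_nth_succ (T : eqType) (s : seq T) x0 i :
  uniq s -> (i.+1 < size s)%N -> next s (nth x0 s i) = nth x0 s i.+1.
Proof.
move=> Us Hi; rewrite next_nth mem_nth ?(ltnW Hi) //.
case: s Us Hi => [|y p] // Us Hi.
by rewrite index_uniq ?(ltnW Hi) //= (set_nth_default x0).
Qed.

Lemma der_of_list n (w : seq 'I_n) x0 : uniq w -> (1 < n)%N ->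
  exists2 pi, pi \in derangements n &
    forall i, (i.+1 < size w)%N -> pi (nth x0 w i) = nth x0 w i.+1.
Proof.
move=> Uw Hn.
pose s := w ++ [seq t <- enum 'I_n | t \notin w].
have Us : uniq s.
  rewrite cat_uniq Uw filter_uniq ?enum_uniq //= andbT.
  by apply/hasPn => t; rewrite mem_filter => /andP[].
have Ms : forall t, t \in s by move=> t; rewrite mem_cat mem_filter mem_enum andbT orbN.
have Ss : (1 < size s)%N.
  apply: leq_trans Hn _; rewrite -[X in (X <= _)%N]size_enum_ord.
  by apply: uniq_leq_size; [exact: enum_uniq | move=> t _; exact: Ms].
exists (perm (can_inj (prev_next Us))).
  by rewrite inE; apply/forallP => t; rewrite permE next_neq.
move=> i Hi; rewrite permE.
have E : forall k, (k < size w)%N -> nth x0 s k = nth x0 w k by move=> k Hk; rewrite nth_cat Hk.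
rewrite -E ?(ltnW Hi) // -E // next_nth_succ //.
by apply: leq_trans Hi _; rewrite size_cat leq_addr.
Qed.

Lemma swap_rel n (cf : 'I_n * 'I_n -> rat) :
  (1 < n)%N ->
  (forall pi, pi \in derangements n -> \sum_i cf (i, pi i) = 0) ->
  forall a b c d : 'I_n, uniq [:: a; b; c; d] ->
  cf (a, b) + cf (c, d) = cf (a, d) + cf (c, b).
Proof.
move=> n1 HS a b c d U.
have [pi Hpi Hn] := der_of_list a U n1.
have pa : pi a = b by apply: (Hn 0%N).
have pb : pi b = c by apply: (Hn 1%N).
have pc : pi c = d by apply: (Hn 2%N).
move: U; rewrite /= !inE !negb_or => /and4P [/and3P[ab ac ad] /andP[bc bd] cd _].
have Hpi' : (tperm a c * pi)%g \in derangements n.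
  rewrite inE; apply/forallP => t; rewrite permM.
  case: tpermP => [->|->|ta tc].
  - by rewrite pc eq_sym.
  - by rewrite pa.
  - by move: Hpi; rewrite inE => /forallP.
have := sum_swap (f := fun i => cf (i, pi i)) (g := fun i => cf (i, (tperm a c * pi)%g i)) ac.
rewrite /= !permM tpermL tpermR pa pc; apply.
  by move=> i ia ic; rewrite permM tpermD // eq_sym.
by rewrite HS // HS.
Qed.

Lemma key n (cf : 'I_n * 'I_n -> rat) :
  (forall p, p \notin offdiag_pairs n -> cf p = 0) ->
  (forall pi, pi \in derangements n -> \sum_i cf (i, pi i) = 0) ->
  forall p, p \in offdiag_pairs n -> cf p = 0.
Proof.
move=> H0 HS [a b]; rewrite inE /= => /and3P [ha hb ab].
have vab : ((a : nat) <> b) by move=> e; move/eqP: ab; apply; apply: val_inj.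
have n3 : (2 < n)%N by move: (ha) (hb) => /ltP ? /ltP ?; apply/ltP; lia.
have n1 : (1 < n)%N by apply: ltnW.
have zlt : (n.-1 < n)%N by move/ltP: n3 => ?; apply/ltP; lia.
pose z := Ordinal zlt.
have sm : forall i : 'I_n, i != z -> (i < n.-1)%N.
  move=> i iz; have := ltn_ord i; move=> /ltP il; apply/ltP.
  have : (i : nat) <> n.-1 by move=> e; move/eqP: iz; apply; apply: val_inj.
  lia.
have cfz1 : forall i, cf (z, i) = 0 by move=> i; apply: H0; rewrite inE /= ltnn.
have cfz2 : forall i, cf (i, z) = 0 by move=> i; apply: H0; rewrite inE /= ltnn andbF.
have az : a != z by apply/eqP => e; move: ha; rewrite e /= ltnn.
have bz : b != z by apply/eqP => e; move: hb; rewrite e /= ltnn.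
have [n4|n3'] := ltnP 3 n; last first.
  have U : uniq [:: a; b; z] by rewrite /= !inE !negb_or ab az bz.
  have [pi Hpi Hn] := der_of_list a U n1.
  have pa : pi a = b by apply: (Hn 0%N).
  have pb : pi b = z by apply: (Hn 1%N).
  have := HS _ Hpi; rewrite (bigD1 a) //= pa big1 ?addr0 // => i ia.
  have [->|iz] := eqVneq i z; first exact: cfz1.
  suff -> : i = b by rewrite pb cfz2.
  apply: val_inj; have := sm _ iz; move: (ha) (hb) n3' => /ltP ? /ltP ? /leP ? /ltP ?.
  have : (i : nat) <> a by move=> e; move/eqP: ia; apply; apply: val_inj.
  move=> ?; rewrite /=; lia.
have SW := swap_rel n1 HS.
have R1 : forall x y v : 'I_n, x != z -> y != z -> v != z -> x != v -> y != v ->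
    cf (y, v) = cf (x, v).
  move=> x y v xz yz vz xv yv; have [->//|xy] := eqVneq x y.
  have := SW x z y v; rewrite !cfz2 add0r addr0; apply.
  by rewrite /= !inE !negb_or xz xy xv eq_sym yz eq_sym vz yv.
have R2 : forall x u v : 'I_n, x != z -> u != z -> v != z -> x != u -> x != v ->
    cf (x, u) = cf (x, v).
  move=> x u v xz uz vz xu xv; have [->//|uv] := eqVneq u v.
  have := SW x u z v; rewrite !cfz1 !addr0; apply.
  by rewrite /= !inE !negb_or xu xz xv /= uz uv eq_sym vz.
have l0 : (0 < n)%N by apply: ltnW.
have l2 : (2 < n)%N by [].
pose o0 := Ordinal l0; pose o1 := Ordinal n1; pose o2 := Ordinal l2.
have oz : forall o : 'I_n, (o < n.-1)%N -> o != z.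
  by move=> o ho; apply/eqP => e; move: ho; rewrite e ltnn.
have o0z : o0 != z by apply: oz; rewrite /= -ltnS prednK.
have o1z : o1 != z by apply: oz; rewrite /= -ltnS prednK.
have o2z : o2 != z by apply: oz; rewrite /= -ltnS prednK.
have const1 : forall x y : 'I_n, x != z -> y != z -> x != y -> y != o0 ->
    cf (x, y) = cf (o0, o1).
  move=> x y xz yz xy y0.
  rewrite (R1 o0 x y) // ?(eq_sym o0) //.
  have [->//|y1] := eqVneq y o1.
  by apply: R2 => //; rewrite ?(eq_sym o0) // -val_eqE.
have const : forall p, p \in offdiag_pairs n -> cf p = cf (o0, o1).
  move=> [x y]; rewrite inE /= => /and3P [hx hy xy].
  have xz := oz _ hx; have yz := oz _ hy.
  have [y0|y0] := eqVneq y o0; last exact: const1.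
  pose t := if x == o1 then o2 else o1.
  have tz : t != z by rewrite /t; case: ifP.
  have t0 : t != o0 by rewrite /t; case: ifP; rewrite -val_eqE.
  have xt : x != t by rewrite /t; case: ifP => [/eqP->|/negbT//]; rewrite -val_eqE.
  rewrite (R2 x y t) //; first exact: const1.
pose sh := perm (@ordS_inj n).
have Hsh : sh \in derangements n.
  rewrite inE; apply/forallP => t; rewrite permE -val_eqE /=.
  have [lt|ge] := ltnP t.+1 n; first by rewrite modn_small // gtn_eqF.
  have -> : t.+1 = n by apply/eqP; rewrite eqn_leq ge andbT; exact: ltn_ord.
  by rewrite modnn eq_sym -lt0n -ltnS (leq_trans n1 ge).
have := HS _ Hsh.
rewrite (eq_bigr (fun i => if (i, sh i) \in offdiag_pairs n then cf (o0, o1) else 0)); last first.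
  by move=> i _; case: ifP => h; [apply: const | apply: H0; rewrite h].
rewrite -big_mkcond sumr_const => /eqP; rewrite mulrn_eq0 => /orP [/eqP|/eqP C0].
  move=> E; suff : (0 < 0)%N by []; rewrite -[X in (_ < X)%N]E; apply/card_gt0P; exists o0.
  rewrite unfold_in /=; suff : (o0, sh o0) \in offdiag_pairs n by [].
  rewrite inE /= permE -val_eqE /= modn_small //.
  by apply/and3P; split => //; apply/ltP; move/ltP: n4 => ?; lia.
by rewrite const ?C0 // inE /= ha hb ab.
Qed.

Lemma card_offdiag n : (2 <= n)%N -> #|offdiag_pairs n| = ((n - 1) * (n - 2))%N.
Proof.
move=> hn.
pose m := n.-1.
have lm : (m <= n)%N by apply: leq_pred.
pose S := [set i : 'I_n | (val i < m)%N].
have cS : #|S| = m.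
  have -> : S = widen_ord lm @: [set: 'I_m].
    apply/setP => i; rewrite inE; apply/idP/imsetP => [hi|[j _ ->]]; last exact: (ltn_ord j).
    by exists (Ordinal hi); rewrite ?inE //; apply: val_inj.
  by rewrite card_imset ?cardsT ?card_ord //; by move=> x y /(congr1 val) /= /val_inj.
pose B := [set p : 'I_n * 'I_n | p.1 == p.2].
have cD : #|setX S S :&: B| = m.
  have -> : setX S S :&: B = (fun i => (i, i)) @: S.
    apply/setP => [[x y]]; rewrite !inE /=; apply/idP/imsetP => [/andP[/andP[hx _] /eqP <-]|[j]].
      by exists x; rewrite ?inE.
    by rewrite inE => hj [-> ->]; rewrite hj eqxx.
  by rewrite card_imset // => x y [].
have cO : offdiag_pairs n = setX S S :\: B.
  apply/setP => [[x y]]; rewrite !inE /=.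
  by case: (x != y); rewrite ?andbT ?andbF.
have := cardsID B (setX S S); rewrite cD cardsX cS -cO => E.
have -> : (n - 1 = m)%N by rewrite subn1.
have -> : (n - 2 = m - 1)%N by rewrite /m -subn1 -subnDA.
by rewrite mulnBr muln1 -E addKn.
Qed.

Theorem lemma10 (n : nat) (hn : (2 <= n)%N) :
  \rank (derange_mx n) = ((n - 1) * (n - 2))%N.
Proof.
rewrite -card_offdiag // -mxrank_tr.
set A := (derange_mx n)^T.
suff : row_free A by move/eqP.
rewrite -kermx_eq0; apply/eqP/row_matrixP => i; rewrite row0.
set u := row i (kermx A).
have Hu : u *m A = 0 by apply/sub_kermxP; exact: row_sub.
pose cf (p : 'I_n * 'I_n) := \sum_(c | enum_val c == p) u 0 c.
have cfE : forall c, cf (enum_val c) = u 0 c.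
  move=> c; rewrite /cf (big_pred1 c) // => c'.
  by rewrite /= (inj_eq enum_val_inj).
have H0 : forall p, p \notin offdiag_pairs n -> cf p = 0.
  move=> p hp; rewrite /cf big_pred0 // => c; apply/eqP => e.
  by move: hp; rewrite -e enum_valP.
have HS : forall pi, pi \in derangements n -> \sum_i cf (i, pi i) = 0.
  move=> pi hpi.
  have := congr1 (fun M : 'rV[rat]_#|derangements n| => M ord0 (enum_rank_in hpi pi)) Hu.
  rewrite !mxE => E; rewrite -[RHS]E.
  rewrite /cf (eq_bigr (fun i => \sum_c (if enum_val c == (i, pi i) then u 0 c else 0))); last first.
    by move=> k _; rewrite big_mkcond.
  rewrite exchange_big; apply: eq_bigr => c _.
  rewrite !mxE enum_rankK_in //.
  case: (enum_val c) => x y /=.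
  case Ex: (pi x == y).
    rewrite mulr1 -big_mkcond (big_pred1 x) // => j /=.
    rewrite xpair_eqE eq_sym; have [->|jx] := eqVneq j x; first by rewrite eq_sym Ex.
    by [].
  rewrite mulr0 big1 // => j _; rewrite xpair_eqE.
  have [<-|jx] := eqVneq x j; last by [].
  by rewrite eq_sym Ex.
apply/rowP => c; rewrite [RHS]mxE -(cfE c).
apply: key => //; exact: enum_valP.
Qed.
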